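(* Let $k\ge1$, let $M=\Gamma(\mathbb Z\,\overrightarrow{\times}\,G,(k,0))$ with $G$ a Dedekind $\sigma$-complete $\ell$-group, and let $F:\mathbb R^2\to M$ be a two-dimensional spectral resolution. Then for each $i\in\{1,\ldots,k\}$ with $T_i\neq\emptyset$, $T_i$ has at most $k-i+1$ characteristic points; consequently $F$ has at most $k(k+1)/2$ characteristic points.
   Context: $\mathbb Z\,\overrightarrow{\times}\,G$ is $\mathbb Z\times G$ with lexicographic order; $\Gamma(K,v)=([0,v];\oplus,',0,v)$ with $a\oplus b=(a+b)\wedge v$. A two-dimensional spectral resolution is $F:\mathbb R^2\to M$ such that: $F$ is monotone; $\bigvee_{(s,t)}F(s,t)=1$; $F(s,t)=\bigvee_{(s',t')\ll(s,t)}F(s',t')$; $\bigwedge_sF(s,t)=0=\bigwedge_tF(s,t)$; $0\le F(b_1,b_2)-F(a_1,b_2)-F(b_1,a_2)+F(a_1,a_2)\le1$ for $a_i\le b_i$ (in the group). $M_j=\{(j,g)\in M\}$, $T_j=\{(s,t)\colon F(s,t)\in M_j\}$. For $i\ge1$ and $(s,t)\in T_i$, $\pi_i(s,t)=(\inf\{r\colon(r,t)\in T_i\},\inf\{r\colon(s,r)\in T_i\})$; characteristic points of $T_i$ are the $\pi_i(s,t)$, $(s,t)\in T_i$; characteristic points of $F$ are those of the $T_i$, $i\ge1$. *)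

(* Defs.v *)
From Stdlib Require Import Reals ZArith List.
From mathcomp Require Import all_boot all_algebra.
Set Implicit Arguments. Unset Strict Implicit. Unset Printing Implicit Defensive.

(* G (an additive abelian group, zmodType) with a relation [le] is a
   Dedekind sigma-complete l-group: [le] is a translation invariant partial
   order, any two elements have a supremum (lattice; infima then exist in any
   po-group), and every sequence bounded above has a supremum. *)
Definition is_dsc_lgroup (G : zmodType) (le : G -> G -> Prop) : Prop :=
  (forall x, le x x) /\
      (forall x y, le x y -> le y x -> x = y) /\
      (forall x y z, le x y -> le y z -> le x z) /\
      (forall x y z, le x y -> le (GRing.add x z) (GRing.add y z)) /\
      (forall x y : G, exists s, [/\ le x s, le y s &
                         forall u, le x u -> le y u -> le s u]) /\
      (forall u : nat -> G, (exists b, forall n, le (u n) b) ->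
         exists s, (forall n, le (u n) s) /\
                   (forall b, (forall n, le (u n) b) -> le s b)).

Section Lex.
Variables (G : zmodType) (le : G -> G -> Prop) (k : nat).

Definition lexle (x y : Z * G) : Prop :=
  Z.lt (fst x) (fst y) \/ (fst x = fst y /\ le (snd x) (snd y)).
Definition lexadd (x y : Z * G) : Z * G := (Z.add (fst x) (fst y), GRing.add (snd x) (snd y)).
Definition lexsub (x y : Z * G) : Z * G := (Z.sub (fst x) (fst y), GRing.add (snd x) (GRing.opp (snd y))).

Definition lex0 : Z * G := (Z0, GRing.zero).
Definition lextop : Z * G := (Z.of_nat k, GRing.zero).

Definition inM (x : Z * G) : Prop := lexle lex0 x /\ lexle x lextop.

Definition IsSupM (S : Z * G -> Prop) (x : Z * G) : Prop :=
  [/\ inM x, (forall y, S y -> lexle y x) &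
      (forall z, inM z -> (forall y, S y -> lexle y z) -> lexle x z)].
Definition IsInfM (S : Z * G -> Prop) (x : Z * G) : Prop :=
  [/\ inM x, (forall y, S y -> lexle x y) &
      (forall z, inM z -> (forall y, S y -> lexle z y) -> lexle z x)].

Definition spectral_resolution2 (F : R -> R -> Z * G) : Prop :=
  (forall s t, inM (F s t)) /\
      (forall s t s' t', Rle s s' -> Rle t t' -> lexle (F s t) (F s' t')) /\
      IsSupM (fun x => exists s t, x = F s t) lextop /\
      (forall s t, IsSupM (fun x => exists s' t',
                     [/\ Rlt s' s, Rlt t' t & x = F s' t']) (F s t)) /\
      (forall t, IsInfM (fun x => exists s, x = F s t) lex0) /\
      (forall s, IsInfM (fun x => exists t, x = F s t) lex0) /\
      (forall a1 a2 b1 b2, Rle a1 b1 -> Rle a2 b2 ->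
         let D := lexadd (lexsub (lexsub (F b1 b2) (F a1 b2)) (F b1 a2)) (F a1 a2) in
         lexle lex0 D /\ lexle D lextop).

(* T_i = {(s,t) : F(s,t) in M_i} *)
Definition Tset (F : R -> R -> Z * G) (i : nat) (s t : R) : Prop :=
  fst (F s t) = Z.of_nat i.

Definition is_glb (E : R -> Prop) (m : R) : Prop :=
  (forall r, E r -> Rle m r) /\
  (forall m', (forall r, E r -> Rle m' r) -> Rle m' m).

(* p = pi_i(s,t) for some (s,t) in T_i (the infima are real infima) *)
Definition charpt_T (F : R -> R -> Z * G) (i : nat) (p : R * R) : Prop :=
  exists s t, [/\ Tset F i s t,
                  is_glb (fun r => Tset F i r t) (fst p) &
                  is_glb (fun r => Tset F i s r) (snd p)].

Definition charpt_F (F : R -> R -> Z * G) (p : R * R) : Prop :=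
  exists i, (1 <= i)%N /\ charpt_T F i p.

End Lex.

(* Main.v *)
Require Import Defs.
From Stdlib Require Import Reals ZArith List Lia Lra Classical.
From mathcomp Require Import all_boot all_algebra zify.
Import GRing.Theory.
Module PartA.
Local Open Scope Z_scope.

Definition good (f : R -> R -> Z) (K : Z) :=
  (forall s t, (0 <= f s t) /\ (f s t <= K)) /\
  (forall s t s' t', (Rle (s) (s')) -> (Rle (t) (t')) -> (f s t <= f s' t')) /\
  (forall a1 a2 b1 b2, (Rle (a1) (b1)) -> (Rle (a2) (b2)) ->
      (0 <= f b1 b2 - f a1 b2 - f b1 a2 + f a1 a2)) /\
  (forall s t, exists s' t', (Rlt (s') (s)) /\ (Rlt (t') (t)) /\ (f s t <= f s' t')).

Definition cp (f : R -> R -> Z) (i : nat) (p : R * R) : Prop :=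
  exists s t, [/\ f s t = Z.of_nat i,
     is_glb (fun r => f r t = Z.of_nat i) (fst p) &
     is_glb (fun r => f s r = Z.of_nat i) (snd p)].

Lemma glb1 (g : R -> Z) (i : Z) s a :
  (forall x y, (Rle (x) (y)) -> (g x <= g y)) -> g s = i ->
  is_glb (fun r => g r = i) a ->
  (forall x, (Rlt (a) (x)) -> (i <= g x)) /\ (forall x, (Rlt (x) (a)) -> (g x < i))
  /\ (Rle (a) (s)).
Proof.
move=> Hm Hs [Hlb Hgl].
have Has : (Rle (a) (s)) by apply: Hlb.
split; last split => //.
- move=> x Hx. case: (Z_lt_le_dec (g x) i) => Hlt //.
  have : (Rle (x) (a)).
    apply: Hgl => r Hr. apply: Rnot_lt_le => Hrx.
    have := Hm r x (Rlt_le _ _ Hrx). lia.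
  lra.
- move=> x Hx.
  have := Hm x s ltac:(lra). rewrite Hs => H.
  case: (Z.eq_dec (g x) i) => E; last lia.
  have := Hlb x E. lra.
Qed.

Section S.
End S.

Lemma cp_facts f K i p : good f K -> cp f i p ->
  exists s t, f s t = Z.of_nat i /\ (Rlt (fst p) (s)) /\ (Rlt (snd p) (t)) /\
    (forall x, (Rlt (fst p) (x)) -> (Z.of_nat i <= f x t)) /\
    (forall x, (Rle (x) (fst p)) -> (f x t < Z.of_nat i)) /\
    (forall y, (Rlt (snd p) (y)) -> (Z.of_nat i <= f s y)) /\
    (forall y, (Rlt (y) (snd p)) -> (f s y < Z.of_nat i)).
Proof.
move=> [Hb [Hm [H2 HLC]]] [s [t [Hst Ha Hb']]].
have [R1 [R2 R3]] := glb1 (fun r => f r t) _ s _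
   (fun x y h => Hm x t y t h (Rle_refl t)) Hst Ha.
have [C1 [C2 C3]] := glb1 (fun r => f s r) _ t _
   (fun x y h => Hm s x s y (Rle_refl s) h) Hst Hb'.
exists s, t; split => //; split; last split; last split => //; last split; last split => //.
- have [s' [t' [h1 [h2 h3]]]] := HLC s t.
  have := Hm s' t' s' t ltac:(lra) ltac:(lra).
  case: (Rlt_le_dec s' (fst p)) => h; last lra.
  have := R2 _ h. lia.
- have [s' [t' [h1 [h2 h3]]]] := HLC s t.
  have := Hm s' t' s t' ltac:(lra) ltac:(lra).
  case: (Rlt_le_dec t' (snd p)) => h; last lra.
  have := C2 _ h. lia.
- move=> x Hx. case: (Rle_lt_or_eq_dec _ _ Hx) => h; first by apply: R2.
  subst x.
  have [s' [t' [h1 [h2 h3]]]] := HLC (fst p) t.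
  have := Hm s' t' s' t ltac:(lra) ltac:(lra).
  have := R2 _ h1. lia.
Qed.

Lemma noB f K i p1 p2 : good f K -> cp f i p1 -> cp f i p2 ->
  (Rle (fst p1) (fst p2)) -> (Rlt (snd p1) (snd p2)) -> False.
Proof.
move=> G0 c1 c2 ha hb.
have [s1 [t1 [e1 [as1 [bt1 [R11 [R12 [C11 C12]]]]]]]] := cp_facts _ _ _ _ G0 c1.
have [s2 [t2 [e2 [as2 [bt2 [R21 [R22 [C21 C22]]]]]]]] := cp_facts _ _ _ _ G0 c2.
case: G0 => [Hb [Hm [H2 HLC]]].
set x := Rmin s1 s2.
have hx1 : (Rle (x) (s1)) by apply: Rmin_l.
have hx2 : (Rle (x) (s2)) by apply: Rmin_r.
have hx3 : (Rlt (fst p1) (x)) by apply: Rmin_glb_lt; lra.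
set m := Rmin (snd p2) t1.
have hm1 : (Rle (m) (snd p2)) by apply: Rmin_l.
have hm2 : (Rle (m) (t1)) by apply: Rmin_r.
have hm3 : (Rlt (snd p1) (m)) by apply: Rmin_glb_lt; lra.
set y := (Rdiv (Rplus (snd p1) m) 2).
have := R11 x hx3. have := C11 y ltac:(rewrite /y; lra).
have := H2 x y s1 t1 hx1 ltac:(rewrite /y; lra).
have := C22 y ltac:(rewrite /y; lra).
have := Hm x y s2 y hx2 (Rle_refl _).
lia.
Qed.

Lemma cp_inj f K i p1 p2 : good f K -> cp f i p1 -> cp f i p2 ->
  fst p1 = fst p2 -> p1 = p2.
Proof.
move=> G0 c1 c2 e.
case: (Rtotal_order (snd p1) (snd p2)) => [h|[h|h]].
- case: (noB _ _ _ _ _ G0 c1 c2 ltac:(lra) h).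
- by case: p1 p2 e h c1 c2 => ?? [??] /= -> ->.
- case: (noB _ _ _ _ _ G0 c2 c1 ltac:(lra) h).
Qed.
End PartA.
Import PartA.
Module PartB.
Local Open Scope Z_scope.

Lemma pigeon (l : list R) (phi : R -> Z) lo hi : NoDup l ->
  (forall x y, In x l -> In y l -> phi x = phi y -> x = y) ->
  (forall x, In x l -> lo <= phi x /\ phi x <= hi) -> lo <= hi + 1 ->
  Z.of_nat (length l) <= hi - lo + 1.
Proof.
move=> Hnd Hinj Hr Hlh.
set psi := fun x => Z.to_nat (phi x - lo).
have H1 : NoDup (List.map psi l).
  apply: NoDup_map_NoDup_ForallPairs => //.
  move=> x y hx hy; rewrite /psi => E.
  apply: Hinj => //.
  have := Hr x hx; have := Hr y hy. lia.
have H2 : incl (List.map psi l) (List.seq 0 (Z.to_nat (hi - lo + 1))).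
  move=> n /in_map_iff [x [<- hx]]. apply/in_seq.
  have := Hr x hx. rewrite /psi. lia.
have := NoDup_incl_length H1 H2.
rewrite length_map length_seq. lia.
Qed.

Lemma upper_list (P : R -> R -> Prop) (l : list R) :
  (forall a, In a l -> exists t, P a t) ->
  exists Y, forall a, In a l -> exists t, Rle t Y /\ P a t.
Proof.
elim: l => [|a l IH] H.
- by exists R0.
- have [Y HY] := IH (fun b hb => H b (or_intror hb)).
  have [t Ht] := H a (or_introl erefl).
  exists (Rmax t Y) => b [<-|hb].
  + exists t; split => //; apply: Rmax_l.
  + have [t' [h1 h2]] := HY b hb. exists t'; split => //.
    apply: Rle_trans h1 (Rmax_r _ _).
Qed.

Lemma count_a f K (i : nat) (l : list R) : good f K -> NoDup l ->
  (1 <= Z.of_nat i <= K) ->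
  (forall a, In a l -> exists t, (forall x, Rlt a x -> Z.of_nat i <= f x t) /\
       f a t < Z.of_nat i) ->
  Z.of_nat (length l) <= K - Z.of_nat i + 1.
Proof.
move=> [Hb [Hm [H2 HLC]]] Hnd Hi Ha.
have [Y HY] := upper_list _ l Ha.
set phi := fun a => Z.max (f a Y + 1) (Z.of_nat i).
have key : forall a a', In a l -> In a' l -> Rlt a a' -> phi a < phi a'.
  move=> a a' ha ha' hlt.
  have [t [ht [K1 K2]]] := HY a ha.
  have := K1 a' hlt.
  have := H2 a t a' Y (Rlt_le _ _ hlt) ht.
  have := Hm a' t a' Y (Rle_refl _) ht.
  rewrite /phi. lia.
apply: (pigeon l phi) => //; last lia.
- move=> x y hx hy E.
  case: (Rtotal_order x y) => [h|[h|h]] //.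
  + have := key _ _ hx hy h. lia.
  + have := key _ _ hy hx h. lia.
- move=> x hx; split; first by rewrite /phi; lia.
  have [t [ht [K1 K2]]] := HY x hx.
  have := K1 (Rplus x 1) ltac:(lra).
  have := H2 x t (Rplus x 1) Y ltac:(lra) ht.
  have := Hm (Rplus x 1) t (Rplus x 1) Y (Rle_refl _) ht.
  have := Hb (Rplus x 1) Y.
  rewrite /phi. lia.
Qed.

Lemma count_cp f K (i : nat) (l : list (R * R)) : good f K -> NoDup l ->
  (1 <= Z.of_nat i <= K) -> (forall p, In p l -> cp f i p) ->
  Z.of_nat (length l) <= K - Z.of_nat i + 1.
Proof.
move=> G0 Hnd Hi Hl.
rewrite -(length_map fst).
apply: (count_a f K i) => //.
- apply: NoDup_map_NoDup_ForallPairs => // x y hx hy E.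
  exact: (cp_inj _ _ _ _ _ G0 (Hl _ hx) (Hl _ hy) E).
- move=> a /in_map_iff [p [<- hp]].
  have [s [t [e [as1 [bt1 [R11 [R12 _]]]]]]] := cp_facts _ _ _ _ G0 (Hl _ hp).
  exists t; split => //. apply: R12. apply: Rle_refl.
Qed.

Lemma max_nat (Q : nat -> Prop) (B : nat) :
  (forall n, Q n -> (n <= B)%coq_nat) -> Q 0%nat ->
  exists n, Q n /\ forall m, Q m -> (m <= n)%coq_nat.
Proof.
move=> HB.
suff: forall d n0, (B <= n0 + d)%coq_nat -> Q n0 ->
  exists n, Q n /\ forall m, Q m -> (m <= n)%coq_nat.
  by move=> H hq0; apply: (H B 0%nat) => //; lia.
elim=> [|d IH] n0 hd hq.
- exists n0; split => // m hm. have := HB m hm. lia.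
- case: (classic (exists m, Q m /\ (n0 < m)%coq_nat)) => [[m [hm hlt]]|hno].
  + apply: (IH m) => //. lia.
  + exists n0; split => // m hm.
    case: (Compare_dec.le_lt_dec m n0) => // h.
    case: hno; exists m; split => //.
Qed.

Lemma max_list (A : Type) (P : A -> Prop) (B : nat) :
  (forall l, NoDup l -> (forall x, In x l -> P x) -> (length l <= B)%coq_nat) ->
  exists l, (length l <= B)%coq_nat /\ forall x, P x -> In x l.
Proof.
move=> HB.
set Q := fun n => exists l, NoDup l /\ (forall x, In x l -> P x) /\ length l = n.
have [n [[l [h1 [h2 h3]]] hmax]] : exists n, Q n /\ forall m, Q m -> (m <= n)%coq_nat.
  apply: (max_nat Q B).
  - move=> n [l [h1 [h2 <-]]]. exact: HB.
  - exists nil; split; first constructor. split => //.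
exists l; split; first exact: HB.
move=> x hx. apply: NNPP => hnot.
have : Q (S n).
  exists (x :: l); split; first by constructor.
  split; last by rewrite /= h3.
  by move=> y [<-|hy] //; apply: h2.
move/hmax. lia.
Qed.
End PartB.
Import PartB.
Module PartC.
Local Open Scope Z_scope.

Lemma lexle_fst (G : zmodType) (le : G -> G -> Prop) x y :
  lexle le x y -> fst x <= fst y.
Proof. case=> [h|[h _]]; lia. Qed.

Lemma good_of (k : nat) (G : zmodType) (le : G -> G -> Prop) (F : R -> R -> Z * G) :
  is_dsc_lgroup le -> spectral_resolution2 le k F ->
  good (fun s t => fst (F s t)) (Z.of_nat k).
Proof.
move=> [Hrefl [Hanti [Htrans [Htr [Hjoin Hsig]]]]].
move=> [Hin [Hmono [Hsup [Hlc [Hinf1 [Hinf2 Hvol]]]]]].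
have Hbd : forall s t, 0 <= fst (F s t) /\ fst (F s t) <= Z.of_nat k.
  move=> s t; have [h1 h2] := Hin s t.
  move/lexle_fst: h1; move/lexle_fst: h2 => /= h2 h1. lia.
split => //; split.
  move=> s t s' t' h1 h2; exact: lexle_fst (Hmono _ _ _ _ h1 h2).
split.
  move=> a1 a2 b1 b2 h1 h2.
  have := Hvol a1 a2 b1 b2 h1 h2. cbv zeta. case=> /lexle_fst H _.
  move: H. rewrite /lexadd /lexsub /=. lia.
move=> s t. apply: NNPP => Hno.
have H : forall s' t', Rlt s' s -> Rlt t' t -> fst (F s' t') < fst (F s t).
  move=> s' t' h1 h2.
  case: (Z_lt_le_dec (fst (F s' t')) (fst (F s t))) => // h.
  case: Hno; exists s', t'; split => //; split => //.
have Hpos : 0 < fst (F s t).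
  have := H (Rminus s 1) (Rminus t 1) ltac:(lra) ltac:(lra).
  have := Hbd (Rminus s 1) (Rminus t 1). lia.
have Hub := Hbd s t.
have [Hin0 _ Hleast] := Hlc s t.
move: Hin0 Hleast H Hpos Hub. case: (F s t) => j g /= Hin0 Hleast H Hpos Hub.
case: (classic (exists x : G, x <> 0%R)) => [[x hx]|hnone].
- have [e [he1 he2]] : exists e : G, le 0%R e /\ e <> 0%R.
    have [s0 [h1 h2 h3]] := Hjoin x 0%R.
    case: (classic (s0 = 0%R)) => hs0.
    + exists (- x)%R; split.
        have := Htr _ _ (- x)%R h1. by rewrite hs0 addrN add0r.
      move=> /eqP; rewrite oppr_eq0 => /eqP //.
    + by exists s0.
  have Hge : le (g - e)%R g.
    have := Htr _ _ (g - e)%R he1. by rewrite add0r [(e + _)%R]addrC subrK.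
  have := Hleast (j, (g - e)%R).
  case.
  + split; first by left => /=.
    case: Hin0 => _ [/= h|[/= h1 h2]]; first by left.
    right; split => //. exact: Htrans Hge h2.
  + move=> y [s' [t' [h1 h2 ->]]]. left => /=. exact: H.
  + move=> /= h; lia.
  + move=> [/= _ h].
    have h' := Htr _ _ e h. rewrite subrK in h'.
    have h'' := Htr _ _ g he1. rewrite add0r [(e + _)%R]addrC in h''.
    have E := Hanti _ _ h' h''.
    apply: he2. by rewrite -(addKr g e) E addNr.
- have H0 : forall x : G, x = 0%R.
    move=> x; apply: NNPP => hx; apply: hnone; by exists x.
  have := Hleast (j - 1, 0%R).
  case.
  + split.
      case: (Z_lt_le_dec 0 (j - 1)) => h; first by left.
      right; split => /=; [lia | exact: Hrefl].
    left => /=. case: Hin0 => _ /lexle_fst /= h. lia.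
  + move=> y [s' [t' [h1 h2 ->]]].
    have := H s' t' h1 h2.
    case: (Z_lt_le_dec (fst (F s' t')) (j - 1)) => h hh; first by left.
    right; split => /=; first lia.
    rewrite (H0 (snd (F s' t'))). exact: Hrefl.
  + move=> /= h; lia.
  + move=> [/= h _]; lia.
Qed.
End PartC.
Import PartC.

Fixpoint Ssum (k n : nat) : nat :=
  match n with O => O | S n => (Ssum k n + (k - n))%coq_nat end.

Lemma Ssum_eq k n : (n <= k)%coq_nat ->
  (2 * Ssum k n + n * n = n * (2 * k + 1))%coq_nat.
Proof.
elim: n => [|n IH] h /=; first lia.
have := IH ltac:(lia). nia.
Qed.

Theorem theorem4p10 (k : nat) (G : zmodType) (le : G -> G -> Prop)
    (F : R -> R -> Z * G) :
  (1 <= k)%N -> is_dsc_lgroup le -> spectral_resolution2 le k F ->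
  (forall i : nat, (1 <= i <= k)%N -> (exists s t, Tset F i s t) ->
     exists l : list (R * R), (length l <= k - i + 1)%N /\
       (forall p, charpt_T F i p -> In p l)) /\
  (exists l : list (R * R), (length l <= k * (k + 1) %/ 2)%N /\
       (forall p, charpt_F F p -> In p l)).
Proof.
move=> hk Hg Hs.
have G0 := good_of k G le F Hg Hs.
have part1 : forall i, (1 <= i <= k)%N -> exists l : list (R * R),
    (length l <= k - i + 1)%coq_nat /\ forall p, charpt_T F i p -> In p l.
  move=> i hi. apply: (max_list _ (charpt_T F i)).
  move=> l hnd hl.
  have := count_cp (fun s t => fst (F s t)) (Z.of_nat k) i l G0 hnd
    ltac:(lia) (fun p hp => hl p hp).
  lia.
split.
- move=> i hi _. have [l [h1 h2]] := part1 i hi. exists l; split => //. lia.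
- have gen : forall n, (n <= k)%coq_nat -> exists l : list (R * R),
      (length l <= Ssum k n)%coq_nat /\
      forall p i, (1 <= i)%coq_nat -> (i <= n)%coq_nat -> charpt_T F i p -> In p l.
    elim=> [|n IH] hn.
    + exists nil; split => /=; first lia. move=> p i h1 h2; lia.
    + have [l1 [h11 h12]] := part1 n.+1 ltac:(lia).
      have [l2 [h21 h22]] := IH ltac:(lia).
      exists (l1 ++ l2); split.
        rewrite length_app /=. lia.
      move=> p i h1 h2 hc. apply/in_or_app.
      case: (Nat.eq_dec i n.+1) => e.
      * left. apply: h12. by rewrite -e.
      * right. apply: (h22 p i) => //. lia.
  have [l [h1 h2]] := gen k (le_n k).
  exists l; split.
    have E := Ssum_eq k k (le_n k).
    have -> : (k * (k + 1) %/ 2 = Ssum k k)%N.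
      rewrite (_ : (k * (k + 1) = Ssum k k * 2)%N) ?mulnK //. lia.
    lia.
  move=> p [i [hi hc]].
  apply: (h2 p i) => //; first lia.
  case: hc => s [t [e _ _]].
  case: G0 => Hb _. have := Hb s t. rewrite /Tset in e. rewrite /= e. lia.
Qed.
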